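(* Let $\|\cdot\|_{Lo}$ be the Lorentz norm on $\mathbb{R}^p$ ($p\ge2$) and let $S_\star\subset\{1,\dots,p\}$ with $p\in S_\star$. Then for all $\beta\in\mathbb{R}^p$, $$\|\beta_{S_\star^{c}}\|_{Lo}\le\tfrac32\,\Omega^{S_\star^{c}}(\beta_{S_\star^{c}}),$$ i.e. the constant $C_{S_\star}$ can be taken equal to $3/2$.
   Context: The Lorentz cone is $\mathcal{A}:=\{a\in\mathbb{R}^p: a_j>0\ \forall j,\ a_p\ge\|(a_1,\dots,a_{p-1})\|_2\}$ and $\|\beta\|_{Lo}:=\inf_{a\in\mathcal{A}}\frac12\sum_{i=1}^p\big(\beta_i^2/a_i+a_i\big)$. For $S\ni p$, $\beta_{S^c}$ is the vector in $\mathbb{R}^p$ with entries $\beta_j1\{j\notin S\}$, $\mathcal{A}_{S^c}:=\{(a_j)_{j\in S^c}:a\in\mathcal{A}\}$, and $\Omega^{S^c}(\beta_{S^c}):=\inf_{a\in\mathcal{A}_{S^c}}\frac12\sum_{j\in S^c}\big(\beta_j^2/a_j+a_j\big)$. *)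

(* Defs.v *)
(* R : realType, vectors in R^p as functions 'I_p -> R.
   Coordinates are indexed 0..p-1; the paper's coordinate p is the index p.-1. *)
From HB Require Import structures.
From mathcomp Require Import all_boot all_order all_algebra.
From mathcomp Require Import all_classical all_reals.
Set Implicit Arguments. Unset Strict Implicit. Unset Printing Implicit Defensive.
Import Order.TTheory GRing.Theory Num.Theory.
Local Open Scope classical_set_scope.
Local Open Scope ring_scope.

Definition is_last (p : nat) (j : 'I_p) : bool := (val j == p.-1)%N.

Definition lorentz_cone (R : realType) (p : nat) : set ('I_p -> R) :=
  [set a | (forall j, 0 < a j) /\
           (forall j, is_last j ->
              Num.sqrt (\sum_(i < p | ~~ is_last i) a i ^+ 2) <= a j)].

Definition lorentz_norm (R : realType) (p : nat) (beta : 'I_p -> R) : R :=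
  inf [set (2^-1 * \sum_(i < p) (beta i ^+ 2 / a i + a i)) | a in @lorentz_cone R p].

Definition restrict_compl (R : realType) (p : nat) (S : {set 'I_p})
  (beta : 'I_p -> R) : 'I_p -> R := fun j => if j \in S then 0 else beta j.

(* A_{S^c} = {(a_j)_{j in S^c} : a in A}; an element is represented by any
   function b : 'I_p -> R agreeing with some a in A on S^c (values on S are
   irrelevant, since Omega only uses the S^c coordinates). *)
Definition cone_proj (R : realType) (p : nat) (S : {set 'I_p}) : set ('I_p -> R) :=
  [set b | exists2 a, @lorentz_cone R p a & forall j, j \notin S -> b j = a j].

Definition omega_compl (R : realType) (p : nat) (S : {set 'I_p})
  (beta : 'I_p -> R) : R :=
  inf [set (2^-1 * \sum_(j < p | j \notin S) (beta j ^+ 2 / b j + b j))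
      | b in @cone_proj R p S].

(* Main.v *)
Require Import Defs.
From HB Require Import structures.
From mathcomp Require Import all_boot all_order all_algebra.
From mathcomp Require Import all_classical all_reals.
From mathcomp Require Import ring lra.
Import Order.TTheory GRing.Theory Num.Theory.
Local Open Scope classical_set_scope.
Local Open Scope ring_scope.

Lemma amgm (R : realType) (g b : R) : 0 < b -> 2 * `|g| <= g ^+ 2 / b + b.
Proof.
move=> hb.
have h : g ^+ 2 = `|g| ^+ 2 by rewrite real_normK // num_real.
rewrite h.
have hb' : b != 0 by rewrite gt_eqF.
rewrite -[X in _ <= _ + X](mulfK hb') -mulrDl ler_pdivlMr //.
have := sqr_ge0 (`|g| - b); nra.
Qed.

Lemma sq_sum_le (R : realType) (I : finType) (P : pred I) (x : I -> R) :
  (forall i, P i -> 0 <= x i) ->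
  \sum_(i | P i) x i ^+ 2 <= (\sum_(i | P i) x i) ^+ 2.
Proof.
move=> hx.
have : (\sum_(i | P i) x i ^+ 2 <= (\sum_(i | P i) x i) ^+ 2) /\ 0 <= \sum_(i | P i) x i.
  apply: (big_ind2 (fun s t => s <= t ^+ 2 /\ 0 <= t)).
  - by rewrite expr0n /=.
  - move=> x1 x2 y1 y2 [h1 h2] [h3 h4]; split; last by rewrite addr_ge0.
    nra.
  - move=> i Pi; split => //; exact: hx.
by case.
Qed.

Theorem lemma13 (R : realType) (p : nat) (hp : (2 <= p)%N) (S : {set 'I_p})
  (hS : forall j : 'I_p, is_last j -> j \in S) (beta : 'I_p -> R) :
  lorentz_norm (restrict_compl S beta)
    <= 3 / 2 * omega_compl S (restrict_compl S beta).
Proof.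
set g := restrict_compl S beta.
have hpl : (p.-1 < p)%N by case: p hp {S hS beta g}.
set j0 : 'I_p := Ordinal hpl.
have lastE : forall i : 'I_p, is_last i = (i == j0).
  move=> i; rewrite /is_last; apply/eqP/eqP => [h|->//]; exact: val_inj.
have gS : forall i, i \in S -> g i = 0 by move=> i hi; rewrite /g /restrict_compl hi.
have gj0 : g j0 = 0 by apply: gS; apply: hS; rewrite lastE.
set L := \sum_(i | i != j0) `|g i|.
have LE : L = \sum_(i | i \notin S) `|g i|.
  have -> : L = \sum_i `|g i| by rewrite (bigD1 j0) //= gj0 normr0 add0r.
  rewrite [RHS]big_mkcond /=; apply: eq_bigr => i _.
  by case: ifP => // /negbFE /gS ->; rewrite normr0.
have L0 : 0 <= L by apply: sumr_ge0 => i _.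
set sq := fun (a0 : 'I_p -> R) => Num.sqrt (\sum_(k < p | ~~ is_last k) a0 k ^+ 2).
pose mk (a0 : 'I_p -> R) (eps : R) : 'I_p -> R :=
  fun i => if is_last i then sq a0 + eps else a0 i.
have mk_cone : forall a0 eps, 0 < eps -> (forall i, 0 < a0 i) -> lorentz_cone (mk a0 eps).
  move=> a0 eps he ha; split.
  - move=> j; rewrite /mk; case: ifP => _ //.
    by rewrite ltr_wpDl // sqrtr_ge0.
  - move=> j hj; rewrite /mk hj.
    have -> : \sum_(i < p | ~~ is_last i) (if is_last i then sq a0 + eps else a0 i) ^+ 2
            = \sum_(i < p | ~~ is_last i) a0 i ^+ 2.
      by apply: eq_bigr => i /negbTE ->.
    by rewrite lerDl ltW.
have hom : L <= omega_compl S g.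
  apply: lb_le_inf.
  - exists (2^-1 * \sum_(j < p | j \notin S) (g j ^+ 2 / mk (fun=> 1) 1 j + mk (fun=> 1) 1 j)).
    exists (mk (fun=> 1) 1) => //.
    by exists (mk (fun=> 1) 1) => //; apply: mk_cone.
  - move=> y [b [a ha hab] <-].
    suff h : 2 * L <= \sum_(j < p | j \notin S) (g j ^+ 2 / b j + b j) by lra.
    rewrite LE mulr_sumr; apply: ler_sum => j hj.
    rewrite hab //; apply: amgm; exact: ha.1.
suff hlo : lorentz_norm g <= 3 / 2 * L.
  by apply: (le_trans hlo); lra.
apply/ler_addgt0Pr => e he.
set K := \sum_(i | i != j0) (1 : R).
have K0 : 0 <= K by apply: sumr_ge0.
set eps := e / (2 * K + 1).
have eps0 : 0 < eps by rewrite divr_gt0 // ltr_wpDl // mulr_ge0.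
have epsK : eps * (2 * K + 1) = e by rewrite /eps mulfVK // gt_eqF // ltr_wpDl // mulr_ge0.
pose a0 := fun i => `|g i| + eps.
have a0p : forall i, 0 < a0 i by move=> i; rewrite /a0 ltr_wpDl.
set a := mk a0 eps.
have ha := mk_cone a0 eps eps0 a0p.
set T := \sum_(i < p) (g i ^+ 2 / a i + a i).
have hT : T <= 3 * L + e.
  rewrite /T (bigD1 j0) //= gj0 expr0n /= mul0r add0r.
  have aj0 : a j0 <= L + eps * K + eps.
    rewrite /a /mk lastE eqxx lerD2r /sq.
    have -> : \sum_(k < p | ~~ is_last k) a0 k ^+ 2 = \sum_(k < p | k != j0) a0 k ^+ 2.
      by apply: eq_bigl => k; rewrite lastE.
    apply: le_trans; first by apply: ler_wsqrtr; apply: sq_sum_le => i _; exact: ltW.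
    rewrite sqrtr_sqr ger0_norm; last by apply: sumr_ge0 => i _; exact: ltW.
    by rewrite big_split /= mulr_sumr mulr1.
  have hrest : \sum_(i | i != j0) (g i ^+ 2 / a i + a i) <= 2 * L + eps * K.
    rewrite mulr_sumr mulr_sumr -big_split /=; apply: ler_sum => i hi.
    have -> : a i = a0 i by rewrite /a /mk lastE (negbTE hi).
    rewrite /a0 mulr1.
    suff : g i ^+ 2 / (`|g i| + eps) <= `|g i| by lra.
    rewrite ler_pdivrMr; last exact: a0p.
    have -> : g i ^+ 2 = `|g i| ^+ 2 by rewrite real_normK // num_real.
    have := normr_ge0 (g i); nra.
  have ee : e = 2 * (eps * K) + eps by rewrite -epsK; ring.
  lra.
have hLo : lorentz_norm g <= 2^-1 * T.
  apply: ge_inf.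
  - exists 0 => y [b hb <-].
    apply: mulr_ge0; first by rewrite invr_ge0.
    apply: sumr_ge0 => i _.
    have := hb.1 i => hbi.
    by apply: addr_ge0; [apply: divr_ge0; [exact: sqr_ge0|exact: ltW]|exact: ltW].
  - by exists a.
lra.
Qed.
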